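(* Let $N\ge1$ and $n\ge N$ be integers and let $P(t_1,\dots,t_n)$ be a symmetric polynomial with complex coefficients such that $P(x,\dots,x,t_1,\dots,t_{n-N-1})=0$ identically, where $x$ is repeated $N+1$ times. Then the polynomial $P(x,\dots,x,t_1,\dots,t_{n-N})$ (with $x$ repeated $N$ times) is divisible by $\prod_{j=1}^{n-N}(t_j-x)^2$. *)

(* Defs.v *)
From HB Require Import structures.
From mathcomp Require Import all_boot all_algebra.
From mathcomp Require Import Rstruct complex mpoly.
From Stdlib Require Rdefinitions.

Set Implicit Arguments.
Unset Strict Implicit.
Unset Printing Implicit Defensive.

Import GRing.Theory.
Local Open Scope ring_scope.

Definition Cplx : idomainType := complex Rdefinitions.R.

(* diag_subst n N k : the substitution of the n variables of a polynomial
   t_0..t_{n-1} into the polynomial ring in k+1 variables X_0, X_1..X_k,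
   sending the first N variables to X_0 (the repeated variable "x") and the
   variable t_i (i >= N) to X_{i-N+1}.  Used with k = n - N, i.e.
   P(x,...,x,t_1,...,t_{n-N}) with x repeated N times, x = 'X_0, t_j = 'X_j. *)
Definition diag_subst (n N k : nat) : n.-tuple {mpoly Cplx[k.+1]} :=
  [tuple (if (i < N)%N then 'X_0 else 'X_(inord (i - N).+1)) | i < n].

(* Main.v *)
Require Import Defs.
From HB Require Import structures.
From mathcomp Require Import all_boot all_algebra.
From mathcomp Require Import Rstruct complex mpoly.
From Stdlib Require Rdefinitions.
From mathcomp Require Import fingroup perm zify.
Import GRing.Theory Num.Theory.
Local Open Scope ring_scope.
Section S.
Context (R : comRingType).

Lemma mp_ind n (Phi : {mpoly R[n]} -> Prop) :
  Phi 0 -> Phi 1 -> (forall i, Phi 'X_i) ->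
  (forall p q, Phi p -> Phi q -> Phi (p + q)) ->
  (forall p q, Phi p -> Phi q -> Phi (p * q)) ->
  (forall c p, Phi p -> Phi (c *: p)) -> forall p, Phi p.
Proof.
move=> P0 P1 PX PD PM PZ p.
have PXm m : Phi 'X_[m].
  rewrite mpolyXE_id; apply: (big_ind Phi) => // l _.
  elim: (m l) => [|e ih]; first by rewrite expr0.
  by rewrite exprS; apply: PM.
by rewrite [p]mpolyE; apply: (big_ind Phi) => // m _; apply: PZ.
Qed.

Lemma comp_assoc n k l (P : {mpoly R[n]}) (T : n.-tuple {mpoly R[k]})
  (U : k.-tuple {mpoly R[l]}) :
  (P \mPo T) \mPo U = P \mPo [tuple (tnth T i \mPo U) | i < n].
Proof.
elim/mp_ind: P.
- by rewrite !comp_mpoly0.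
- by rewrite !comp_mpoly1.
- by move=> i; rewrite !comp_mpolyXU -!tnth_nth tnth_mktuple.
- by move=> p q hp hq; rewrite !comp_mpolyD hp hq.
- by move=> p q hp hq; rewrite !rmorphM /= hp hq.
- by move=> c p hp; rewrite !comp_mpolyZ hp.
Qed.

Lemma comp_ext n k (P : {mpoly R[n]}) (T T' : n.-tuple {mpoly R[k]}) :
  (forall i, tnth T i = tnth T' i) -> P \mPo T = P \mPo T'.
Proof. by move=> h; congr (_ \mPo _); apply: eq_from_tnth. Qed.

Lemma msym_comp n (s : 'S_n) (P : {mpoly R[n]}) :
  msym s P = P \mPo [tuple 'X_(s i) | i < n].
Proof.
rewrite -[LHS](comp_mpoly_id) msym_mPo; apply: comp_ext => i.
by rewrite !tnth_mktuple.
Qed.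

Lemma sym_comp n k (P : {mpoly R[n]}) (s : 'S_n) (T : n.-tuple {mpoly R[k]}) :
  P \is symmetric -> P \mPo T = P \mPo [tuple tnth T (s i) | i < n].
Proof. by move=> /issymP h; rewrite -msym_mPo h. Qed.

Lemma chain n k (P : {mpoly R[n]}) (T : n.-tuple {mpoly R[k]}) (j : 'I_k) :
  mderiv j (P \mPo T) = \sum_(i < n) (mderiv i P \mPo T) * mderiv j (tnth T i).
Proof.
pose Phi (P : {mpoly R[n]}) := mderiv j (P \mPo T) = \sum_(i < n) (mderiv i P \mPo T) * mderiv j (tnth T i).
have PhiD p q : Phi p -> Phi q -> Phi (p + q).
  rewrite /Phi => hp hq; rewrite comp_mpolyD mderivD hp hq -big_split /=.
  by apply: eq_bigr => i _; rewrite mderivD comp_mpolyD mulrDl.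
have PhiM p q : Phi p -> Phi q -> Phi (p * q).
  rewrite /Phi => hp hq; rewrite rmorphM /= mderivM hp hq mulr_suml mulr_sumr -big_split /=.
  apply: eq_bigr => i _; rewrite mderivM comp_mpolyD rmorphM rmorphM /=.
  by rewrite mulrDl; congr (_ + _); rewrite -!mulrA; congr (_ * _); rewrite mulrC.
have PhiZ c p : Phi p -> Phi (c *: p).
  rewrite /Phi => hp; rewrite comp_mpolyZ mderivZ hp scaler_sumr.
  by apply: eq_bigr => i _; rewrite mderivZ comp_mpolyZ scalerAl.
have Phi1 : Phi 1.
  rewrite /Phi comp_mpoly1 -mpolyC1 mderivC big1 // => i _.
  by rewrite mderivC comp_mpoly0 mul0r.
have PhiX i : Phi 'X_i.
  rewrite /Phi comp_mpolyXU (bigD1 i) //= big1 ?addr0.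
    rewrite mderivX mnm1E eqxx.
    have -> : (U_(i) - U_(i) = 0)%MM by apply/mnmP=> l; rewrite !mnmE subnn.
    by rewrite mpolyX0 scale1r comp_mpoly1 mul1r (tnth_nth 0).
  move=> l hl; rewrite mderivX mnm1E eq_sym (negbTE hl) scale0r comp_mpoly0 mul0r //.
have PhiXm m : Phi 'X_[m].
  rewrite mpolyXE_id; apply: (big_ind Phi) => // l _.
  elim: (m l) => [|e ih]; first by rewrite expr0.
  by rewrite exprS; apply: PhiM.
rewrite [P]mpolyE; apply: (big_ind Phi) => //.
rewrite /Phi comp_mpoly0 mderiv0 big1 // => i _; by rewrite mderiv0 comp_mpoly0 mul0r.
by move=> m _; apply: PhiZ.
Qed.

Lemma mderivXU n (i a : 'I_n) : mderiv a ('X_i : {mpoly R[n]}) = (i == a)%:R.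
Proof.
rewrite mderivX mnm1E; case: eqP => [->|_]; last by rewrite scale0r.
have -> : (U_(a) - U_(a) = 0)%MM by apply/mnmP=> l; rewrite !mnmE subnn.
by rewrite mpolyX0 scale1r.
Qed.

Lemma sym_deriv n k (P : {mpoly R[n]}) (T : n.-tuple {mpoly R[k]}) (a b : 'I_n) :
  P \is symmetric -> tnth T a = tnth T b ->
  (mderiv a P) \mPo T = (mderiv b P) \mPo T.
Proof.
move=> Ps hab; pose s := tperm a b.
have hP : P = P \mPo [tuple 'X_(s i) | i < n] by rewrite -msym_comp (issymP _ Ps).
rewrite {1}hP chain (bigD1 b) //= big1 ?addr0; last first.
  move=> i hi; rewrite tnth_mktuple mderivXU.
  case: eqP => [h|_]; last by rewrite mulr0.
  have : s i = s b by rewrite h /s tpermR.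
  by move/perm_inj => e; rewrite e eqxx in hi.
rewrite tnth_mktuple mderivXU /s tpermR eqxx mulr1 comp_assoc.
apply: comp_ext => i; rewrite !tnth_mktuple comp_mpolyXU -tnth_nth.
by case: tpermP => [->|->|]; rewrite ?hab.
Qed.

Lemma subst0_coef k (J : 'I_k) (p : {mpoly R[k]}) (m : 'X_{1..k}) : m J = 0%N ->
  (p \mPo [tuple (if i == J then 0 else 'X_i) | i < k])@_m = p@_m.
Proof.
move=> hm.
have hX m' : 'X_[m'] \mPo [tuple (if i == J then 0 else 'X_i) | i < k]
    = (m' J == 0%N)%:R *: ('X_[m'] : {mpoly R[k]}).
  rewrite comp_mpolyX mpolyXE_id (bigD1 J) //= [in RHS](bigD1 J) //=.
  rewrite tnth_mktuple eqxx; case: eqP => [->|/eqP h].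
    rewrite !expr0 !mul1r scale1r; apply: eq_bigr => i hi.
    by rewrite tnth_mktuple (negbTE hi).
  by rewrite expr0n (negbTE h) mul0r scale0r.
have e1 := mpolyE p.
rewrite comp_mpolyEX [in RHS]e1 !(big_morph (mcoeff m) (@mcoeffD _ _ m) (mcoeff0 _ m)).
apply: eq_bigr => m' _.
rewrite hX !mcoeffZ mcoeffX.
by case: (eqVneq m' m) => [->|_]; rewrite ?hm ?eqxx ?mulr1 ?scale1r ?mcoeffX ?eqxx //= ?mulr0 ?mcoeffZ ?mcoeffX.
Qed.

Lemma extract k (p : {mpoly R[k.+1]}) :
  (forall (j : 'I_k) m, m \in msupp p -> (2 <= m (lift ord0 j))%N) ->
  exists q, p = q * \prod_(j < k) 'X_(lift ord0 j) ^+ 2.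
Proof.
move=> h.
pose V : 'X_{1..k.+1} := [multinom (if i == ord0 then 0%N else 2%N) | i < k.+1].
have XV : 'X_[V] = \prod_(j < k) ('X_(lift ord0 j) : {mpoly R[k.+1]}) ^+ 2.
  rewrite mpolyXE_id big_ord_recl /= mnmE eqxx expr0 mul1r.
  by apply: eq_bigr => j _; rewrite mnmE.
exists (\sum_(m <- msupp p) p@_m *: 'X_[m - V]).
rewrite -XV mulr_suml {1}[p]mpolyE; apply: eq_big_seq => m hm.
rewrite -scalerAl -mpolyXD submK //; apply/mnm_lepP => i; rewrite mnmE.
by case: (unliftP ord0 i) => [j ->|->]; rewrite ?eqxx //; apply: h.
Qed.

Lemma order2 k (J : 'I_k) (p : {mpoly R[k]}) :
  p \mPo [tuple (if i == J then 0 else 'X_i) | i < k] = 0 ->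
  (mderiv J p) \mPo [tuple (if i == J then 0 else 'X_i) | i < k] = 0 ->
  forall m, m \in msupp p -> (2 <= m J)%N.
Proof.
move=> h0 h1 m; rewrite mcoeff_msupp; case E: (m J) => [|[|e]] // hm.
  by move: hm; rewrite -(@subst0_coef _ J) // h0 mcoeff0 eqxx.
pose m0 := (m - U_(J))%MM.
have hm0 : m0 J = 0%N by rewrite mnmBE mnm1E eqxx E.
have em : (m0 + U_(J))%MM = m.
  apply: submK; apply/mnm_lepP => i; rewrite mnm1E.
  by case: eqP => [<-|]; rewrite ?E.
move: hm; have := mcoeff_mderiv J p m0.
by rewrite -(@subst0_coef _ J) // h1 mcoeff0 hm0 em mulr1n => <-; rewrite eqxx.
Qed.
End S.


Lemma vanish N n l (P : {mpoly Cplx[n]}) (Psym : P \is symmetric)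
  (H0 : P \mPo diag_subst n N.+1 (n - N.+1) = 0) (c : 'I_n) (hc : (N <= c)%N)
  (F : n.-tuple {mpoly Cplx[l]}) (a : {mpoly Cplx[l]})
  (hF : forall i : 'I_n, ((i < N)%N || (i == c)) -> tnth F i = a) : P \mPo F = 0.
Proof.
have hNn : (N < n)%N := leq_ltn_trans hc (ltn_ord c).
pose s := tperm (Ordinal hNn) c.
rewrite (@sym_comp _ _ _ P s) //.
pose U := [tuple if l0 == 0%N :> nat then a else tnth F (s (insubd c (N + l0)%N)) | l0 < (n - N.+1).+1].
transitivity ((P \mPo diag_subst n N.+1 (n - N.+1)) \mPo U); last by rewrite H0 comp_mpoly0.
rewrite comp_assoc; apply: comp_ext => i; rewrite /diag_subst !tnth_mktuple.
case: ifP => hi; rewrite comp_mpolyXU -tnth_nth tnth_mktuple.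
  apply: hF; rewrite /s; case: tpermP => [_|hic|h1 h2]; rewrite ?eqxx ?orbT //.
    apply/orP; right; apply/eqP/val_inj => /=; move: hi; rewrite hic; lia.
  apply/orP; left; rewrite ltnS leq_eqVlt in hi; case/orP: hi => // /eqP h.
  by exfalso; apply: h1; apply: val_inj.
have hb : ((i - N.+1).+1 < (n - N.+1).+1)%N.
  have := ltn_ord i; move: hi; rewrite ltnS; lia.
rewrite inordK //=; congr (tnth F (s _)); apply: val_inj.
rewrite val_insubd; move: hi; rewrite ltnS => hi.
have -> : (N + (i - N.+1).+1 = i)%N by lia.
by rewrite ltn_ord.
Qed.

Lemma sum_sel (R : ringType) n (x : R) (F : 'I_n -> R) (S : pred 'I_n) c :
  S c -> (forall i, S i -> F i = x) -> \sum_i F i * (S i)%:R = 0 ->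
  exists m, x *+ m.+1 = 0.
Proof.
move=> Sc hF; rewrite (eq_bigr (fun i => x *+ S i)); last first.
  move=> i _; case: (boolP (S i)) => h.
    by rewrite hF // mulr1.
  by rewrite mulr0.
rewrite sumrMnr (bigD1 c) //= Sc => h; by exists (\sum_(i | i != c) S i)%N; rewrite -h add1n.
Qed.

Lemma c0 (a : Cplx) m : a *+ m.+1 = 0 -> a = 0.
Proof.
move=> h. have : (a : complex Rdefinitions.R) *+ m.+1 == 0 by apply/eqP; exact: h.
by rewrite mulrn_eq0 /= => /eqP.
Qed.
Lemma c1 k (x : {mpoly Cplx[k]}) m : x *+ m.+1 = 0 -> x = 0.
Proof.
move=> h; apply/mpolyP => mm; rewrite mcoeff0; apply: (@c0 _ m).
by rewrite -mcoeffMn h mcoeff0.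
Qed.

Theorem proposition3 (N n : nat) (hN : (1 <= N)%N) (hNn : (N <= n)%N)
  (P : {mpoly Cplx[n]}) (Psym : P \is symmetric)
  (Hvan : (N < n)%N ->
          P \mPo diag_subst n N.+1 (n - N.+1) = 0) :
  exists Q : {mpoly Cplx[(n - N).+1]},
    P \mPo diag_subst n N (n - N) =
      Q * \prod_(j < n - N) ('X_(lift ord0 j) - 'X_ord0) ^+ 2.
Proof.
case: (ltnP N n) => hlt; last first.
  exists (P \mPo diag_subst n N (n - N)).
  by rewrite big1 ?mulr1 // => j _; have := ltn_ord j; lia.
have H0 := Hvan hlt.
pose D' := [tuple (if (i < N)%N then 'X_0 else 'X_0 + 'X_(inord (i - N).+1))
   | i < n] : n.-tuple {mpoly Cplx[(n - N).+1]}.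
pose sg := [tuple (if i == 0%N :> nat then 'X_i else 'X_i - 'X_0)
   | i < (n - N).+1] : (n - N).+1.-tuple {mpoly Cplx[(n - N).+1]}.
have step1 : P \mPo diag_subst n N (n - N) = (P \mPo D') \mPo sg.
  rewrite comp_assoc; apply: comp_ext => i; rewrite /diag_subst !tnth_mktuple.
  case: ifP => hi; rewrite ?comp_mpolyD comp_mpolyXU -tnth_nth tnth_mktuple //=.
  have hb : ((i - N).+1 < (n - N).+1)%N.
    have := ltn_ord i; move: hi => /negbT; rewrite -leqNgt; lia.
  rewrite comp_mpolyXU -tnth_nth tnth_mktuple inordK //=.
  by rewrite addrC subrK.
have step2 : forall (j : 'I_(n - N)) m, m \in msupp (P \mPo D') -> (2 <= m (lift ord0 j))%N.
  move=> j; set J := lift ord0 j.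
  have hc : (N + j < n)%N by have := ltn_ord j; lia.
  pose c := Ordinal hc.
  pose E := [tuple if (i < N)%N || (i == c) then 'X_0 else 'X_0 + 'X_(inord (i - N).+1)
     | i < n] : n.-tuple {mpoly Cplx[(n - N).+1]}.
  pose Z := [tuple (if i == J then 0 else 'X_i) | i < (n - N).+1]
     : (n - N).+1.-tuple {mpoly Cplx[(n - N).+1]}.
  have J0 : (0 == J) = false by [].
  have hl : forall i : 'I_n, ~~ (i < N)%N -> (inord (i - N).+1 == J) = (i == c).
    move=> i hi; have hb : ((i - N).+1 < (n - N).+1)%N.
      by have := ltn_ord i; move: hi; rewrite -leqNgt; lia.
    apply/eqP/eqP => [/(congr1 val)|->].
      rewrite /= inordK //= => h; apply: val_inj => /=; move: hi h; rewrite -leqNgt.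
 rewrite /bump; lia.
    apply: val_inj => /=; rewrite inordK //=; last by have := ltn_ord j; lia.
    rewrite /= /bump; lia.
  have hDZ : forall i, tnth D' i \mPo Z = tnth E i.
    move=> i; rewrite !tnth_mktuple; case: ifP => hi /=.
      by rewrite comp_mpolyXU -tnth_nth tnth_mktuple J0.
    rewrite comp_mpolyD !comp_mpolyXU -!tnth_nth !tnth_mktuple J0 hl ?hi //.
    by case: eqP => // _; rewrite addr0.
  have hcN : (N <= c)%N by rewrite /= leq_addr.
  have hPE : P \mPo E = 0.
    apply: (@vanish N n _ P Psym H0 c hcN E 'X_0) => i hi.
    by rewrite tnth_mktuple hi.
  have hDE : forall Q : {mpoly Cplx[n]}, (Q \mPo D') \mPo Z = Q \mPo E.
    by move=> Q; rewrite comp_assoc; apply: comp_ext => i; rewrite tnth_mktuple hDZ.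
  apply: order2; first by rewrite hDE.
  have hs : \sum_(i < n) (P^`M(i) \mPo D') * (tnth D' i)^`M(J) = P^`M(c) \mPo D'.
    rewrite (bigD1 c) // big1; last first.
      move=> i hi; rewrite tnth_mktuple; case: ifP => hiN.
        by rewrite mderivXU J0 mulr0.
      by rewrite mderivD !mderivXU J0 hl ?hiN // (negbTE hi) addr0 mulr0.
    rewrite [X in X = _]addr0 tnth_mktuple ifF; last by rewrite ltnNge leq_addr.
    rewrite mderivD !mderivXU J0 hl ?eqxx; last by rewrite -leqNgt leq_addr.
    by rewrite add0r mulr1.
  rewrite chain hs hDE.
  pose E2 := [tuple if (i < N)%N || (i == c) then 'X_J else 'X_0 + 'X_(inord (i - N).+1)
     | i < n] : n.-tuple {mpoly Cplx[(n - N).+1]}.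
  pose Y := [tuple (if i == J then 'X_0 else 'X_i) | i < (n - N).+1]
     : (n - N).+1.-tuple {mpoly Cplx[(n - N).+1]}.
  have hE2 : P \mPo E2 = 0.
    apply: (@vanish N n _ P Psym H0 c hcN E2 'X_J) => i hi.
    by rewrite tnth_mktuple hi.
  have hY : forall i, tnth E2 i \mPo Y = tnth E i.
    move=> i; rewrite !tnth_mktuple; case: ifP => hi.
      by rewrite comp_mpolyXU -tnth_nth tnth_mktuple eqxx.
    move/negbT: hi; rewrite negb_or => /andP [hi1 hi2].
    rewrite comp_mpolyD !comp_mpolyXU -!tnth_nth !tnth_mktuple J0 hl //.
    by rewrite (negbTE hi2).
  have hd : forall i, (tnth E2 i)^`M(J) = ((i < N)%N || (i == c))%:R.
    move=> i; rewrite !tnth_mktuple; case: ifP => hi.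
      by rewrite mderivXU eqxx.
    move/negbT: hi; rewrite negb_or => /andP [hi1 hi2].
    by rewrite mderivD !mderivXU J0 hl // (negbTE hi2) addr0.
  have key : \sum_(i < n) (P^`M(i) \mPo E) * ((i < N)%N || (i == c))%:R = 0.
    have := congr1 (fun q => q^`M(J) \mPo Y) hE2.
    rewrite chain mderiv0 comp_mpoly0 rmorph_sum => h; rewrite -[RHS]h.
    apply: eq_bigr => i _; rewrite rmorphM hd rmorph_nat; congr (_ * _); rewrite -[RHS]/((P^`M(i) \mPo E2) \mPo Y) comp_assoc.
    by apply: comp_ext => l; rewrite tnth_mktuple hY.
  have hF : forall i : 'I_n, (i < N)%N || (i == c) -> P^`M(i) \mPo E = P^`M(c) \mPo E.
    move=> i hS; apply: (@sym_deriv _ _ _ P E i c Psym).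
    by rewrite !tnth_mktuple hS eqxx orbT.
  have [m hm] := @sum_sel _ n (P^`M(c) \mPo E) (fun i => P^`M(i) \mPo E)
     (fun i => (i < N)%N || (i == c)) c (introT orP (or_intror (eqxx c))) hF key.
  exact: c1 hm.
have [q hq] := @extract _ (n - N) (P \mPo D') step2.
exists (q \mPo sg).
rewrite step1 hq rmorphM rmorph_prod.
have hX : forall j : 'I_(n - N), 'X_(lift ord0 j) \mPo sg = 'X_(lift ord0 j) - 'X_ord0.
  move=> j; rewrite comp_mpolyXU -tnth_nth tnth_mktuple.
  have -> : (nat_of_ord (lift ord0 j) == 0%N) = false by [].
  reflexivity.
rewrite [X in _ * X](eq_bigr (fun j : 'I_(n - N) => ('X_(lift ord0 j) - 'X_ord0) ^+ 2)); last first.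
  move=> j _; rewrite rmorphXn; exact: (congr1 (fun z => z ^+ 2) (hX j)).
reflexivity.
Qed.
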